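(* Let $n\ge 2$, let $\epsilon\in(0,1)$, let $Q^0$ be a probability distribution on $n$ categories with $Q^0_i>0$ for all $i$, and let $\widehat{P}$ be a fixed probability vector in $\mathbb{S}^n$ (not varying with $p$). Take $\mathcal{Q}=\{Q^0\}$, and for each $p$ let $\alpha_{\mathrm{L}}=\alpha_{\mathrm{L}}(p)$ be as defined below. Then, as $p\to\infty$, $$\kappa(\widehat{P}\,\|\,Q^0)-\alpha_{\mathrm{L}}=O\left(\sqrt{\frac{\log p}{p}}\right).$$
   Context: $\mathbb{S}^n=\{P\in\mathbb{R}^n:\sum_iP_i=1,\ P_i\ge0\}$. $D(P\|Q)=\sum_iP_i\log(P_i/Q_i)$. The separation distance is $\kappa(P\|Q)=\max_{i\in[n]}\left(1-\frac{P_i}{Q_i}\right)$. For $\alpha\in[0,1]$ let $\mathcal{P}(\widehat{P},\alpha)=\{P\in\mathbb{S}^n: P_i\le \widehat{P}_i/(1-\alpha),\ i=1,\dots,n\}$ (the set of distributions obtainable by discarding a fraction $\alpha$ of the mass of $\widehat{P}$), and let $D^*_\alpha=\min_{P\in\mathcal{P}(\widehat{P},\alpha),\,Q\in\mathcal{Q}}D(P\|Q)$, which for $\mathcal{Q}=\{Q^0\}$ is $\min_{P\in\mathcal{P}(\widehat{P},\alpha)}D(P\|Q^0)$. Define $$\alpha_{\mathrm{L}}=\max\left\{\alpha:\ D^*_\alpha\ \ge\ \frac{1}{p(1-\alpha)}\log\left(\frac1\epsilon\right)+\frac{2n}{p(1-\alpha)}\log\big(p(1-\alpha)+1\big)\right\}.$$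 *)

(* Defs.v *)
From mathcomp Require Import all_boot all_order all_algebra.
From mathcomp Require Import all_classical all_reals all_analysis.
Unset Strict Implicit. Unset Printing Implicit Defensive.
Import Order.TTheory GRing.Theory Num.Theory.
Local Open Scope classical_set_scope.
Local Open Scope ring_scope.

Section Defs.
Variable R : realType.

Definition simplex (n : nat) : set ('I_n -> R) :=
  [set P | (forall i, 0 <= P i) /\ \sum_(i < n) P i = 1].

(* KL divergence D(P||Q) = sum_i P_i log(P_i/Q_i) (natural log; ln 0 = 0 so 0 log 0 = 0) *)
Definition KL (n : nat) (P Q : 'I_n -> R) : R :=
  \sum_(i < n) P i * ln (P i / Q i).

Definition kappa (n : nat) (P Q : 'I_n -> R) : R :=
  sup (range (fun i : 'I_n => 1 - P i / Q i)).

Definition Pset (n : nat) (Phat : 'I_n -> R) (alpha : R) : set ('I_n -> R) :=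
  [set P | simplex n P /\ forall i, P i <= Phat i / (1 - alpha)].

Definition Dstar (n : nat) (Phat Q0 : 'I_n -> R) (alpha : R) : R :=
  inf [set KL n P Q0 | P in Pset n Phat alpha].

Definition alphaL (n : nat) (eps : R) (Phat Q0 : 'I_n -> R) (p : R) : R :=
  sup [set alpha | 0 <= alpha < 1 /\
        ln (1 / eps) / (p * (1 - alpha))
          + (2 * n%:R) / (p * (1 - alpha)) * ln (p * (1 - alpha) + 1)
        <= Dstar n Phat Q0 alpha].

End Defs.

(* Main.v *)
Require Import Defs.
From mathcomp Require Import all_boot all_order all_algebra.
From mathcomp Require Import all_classical all_reals all_analysis.
From mathcomp Require Import ring lra.
Import Order.TTheory GRing.Theory Num.Theory.
Local Open Scope classical_set_scope.
Local Open Scope ring_scope.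

Lemma ln_le_sub1 (R : realType) (x : R) : 0 < x -> ln x <= x - 1.
Proof.
move=> x0; have := expR_ge1Dx (ln x); rewrite lnK ?posrE //; lra.
Qed.

Lemma hell (R : realType) (s t : R) : 0 <= s -> 0 < t ->
  2 * s ^+ 2 - 2 * (s * t) <= s ^+ 2 * ln (s ^+ 2 / t ^+ 2).
Proof.
move=> s0 t0; have [->|sp] := eqVneq s 0.
  by rewrite expr0n /= !mul0r mulr0 subrr.
have {sp} sp : 0 < s by rewrite lt_def sp s0.
have e : s ^+ 2 / t ^+ 2 = ((t / s) ^+ 2)^-1.
  by rewrite expr_div_n invf_div.
rewrite e lnV ?posrE ?exprn_gt0 ?divr_gt0 // lnXn ?divr_gt0 //.
have h := @ln_le_sub1 R _ (divr_gt0 t0 sp).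
have h2 : s ^+ 2 * ln (t / s) <= s ^+ 2 * (t / s - 1).
  by apply: ler_wpM2l => //; rewrite exprn_ge0.
have e2 : s ^+ 2 * (t / s - 1) = s * t - s ^+ 2.
  by field; rewrite gt_eqF.
rewrite e2 in h2.
have e3 : s ^+ 2 * - (ln (t / s) *+ 2) = - 2 * (s ^+ 2 * ln (t / s)).
  by rewrite mulrN mulrnAr; ring.
rewrite e3; lra.
Qed.

Lemma KL_hell (R : realType) n (P Q : 'I_n -> R) : simplex R n P -> simplex R n Q ->
  (forall i, 0 < Q i) ->
  \sum_(i < n) (Num.sqrt (P i) - Num.sqrt (Q i)) ^+ 2 <= KL R n P Q.
Proof.
move=> [P0 P1] [Q0 Q1] Qp.
have e : \sum_(i < n) (Num.sqrt (P i) - Num.sqrt (Q i)) ^+ 2 =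
   \sum_(i < n) (2 * P i - 2 * (Num.sqrt (P i) * Num.sqrt (Q i))).
  apply/eqP; rewrite -subr_eq0 -sumrB.
  rewrite (eq_bigr (fun i => Q i - P i)); last first.
    move=> i _; rewrite sqrrB !sqr_sqrtr ?P0 ?ltW //; ring.
  by rewrite sumrB P1 Q1 subrr.
rewrite e /KL; apply: ler_sum => i _.
have := @hell R (Num.sqrt (P i)) (Num.sqrt (Q i)) (sqrtr_ge0 _); rewrite sqrtr_gt0 Qp => /(_ isT).
by rewrite !sqr_sqrtr ?P0 // ltW.
Qed.

Arguments KL_hell {R n P Q}.

Lemma KL_ge0 (R : realType) n (P Q : 'I_n -> R) : simplex R n P -> simplex R n Q ->
  (forall i, 0 < Q i) -> 0 <= KL R n P Q.
Proof.
move=> hP hQ hp; apply: (le_trans _ (KL_hell hP hQ hp)).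
by apply: sumr_ge0 => i _; rewrite sqr_ge0.
Qed.

Lemma KL_single (R : realType) n (P Q : 'I_n -> R) (i : 'I_n) (d : R) :
  simplex R n P -> simplex R n Q -> (forall i, 0 < Q i) -> 0 <= d <= 1 ->
  P i <= Q i * (1 - d) -> Q i * d ^+ 2 / 4 <= KL R n P Q.
Proof.
move=> hP hQ hp /andP[d0 d1] hPi; apply: (le_trans _ (KL_hell hP hQ hp)).
rewrite (bigD1 i) //=.
set S := (\sum_(j < n | j != i) _).
have HS : 0 <= S by apply: sumr_ge0 => j _; rewrite sqr_ge0.
set s := Num.sqrt (P i); set t := Num.sqrt (Q i).
apply: (@le_trans _ _ ((s - t) ^+ 2)); last by rewrite lerDl.
have s0 : 0 <= s by apply: sqrtr_ge0.
have t0 : 0 < t by rewrite sqrtr_gt0.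
have es : s ^+ 2 = P i by rewrite sqr_sqrtr // hP.1.
have et : t ^+ 2 = Q i by rewrite sqr_sqrtr // ltW.
have hs : s <= t * (1 - d / 2).
  rewrite -es -et in hPi.
  have u0 : 0 <= t * (1 - d / 2) by apply: mulr_ge0; [exact: ltW | lra].
  have h2 : s ^+ 2 <= (t * (1 - d / 2)) ^+ 2.
    apply: (le_trans hPi); rewrite -subr_ge0.
    have -> : (t * (1 - d / 2)) ^+ 2 - t ^+ 2 * (1 - d) = (t * d / 2) ^+ 2 by field.
    exact: sqr_ge0.
  move: h2; rewrite ler_pXn2r // ?nnegrE //.
rewrite -et; nra.
Qed.

Theorem theorem2 (R : realType) (n : nat) (hn : (2 <= n)%N) (eps : R)
    (heps : 0 < eps < 1) (Q0 : 'I_n -> R) (hQ0 : @simplex R n Q0)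
    (hQ0pos : forall i, 0 < Q0 i) (Phat : 'I_n -> R) (hPhat : @simplex R n Phat) :
  exists C : R, exists p0 : R, forall p : R, p0 <= p ->
    `| @kappa R n Phat Q0 - @alphaL R n eps Phat Q0 p | <= C * Num.sqrt (ln p / p).
Proof.
have n0 : (0 < n)%N by exact: leq_trans hn.
pose i0 : 'I_n := Ordinal n0.
pose f := fun i : 'I_n => 1 - Phat i / Q0 i.
case: (@arg_maxP _ R _ i0 xpredT f isT) => [im _ Hmax].
have Hm : forall j, f j <= f im by move=> j; exact: Hmax.
clear Hmax.
have hk : kappa R n Phat Q0 = f im.
  apply/eqP; rewrite eq_le; apply/andP; split.
  - apply: ge_sup; first by exists (f im), im.
    by move=> _ [j _ <-]; exact: Hm.
  - apply: ub_le_sup; last by exists im.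
    by exists (f im) => _ [j _ <-]; exact: Hm.
rewrite hk.
set k := f im.
set q := Q0 im.
have hq : 0 < q := hQ0pos im.
have ePh : Phat im = q * (1 - k) by rewrite /k /f /q; field; rewrite gt_eqF.
have k1 : k <= 1.
  rewrite /k /f lerBlDr lerDl; apply: divr_ge0; [exact: hPhat.1 | exact: ltW].
have k0 : 0 <= k.
  have e1 : \sum_(j < n) Q0 j * f j = 0.
    rewrite (eq_bigr (fun j => Q0 j - Phat j)); last first.
      by move=> j _; rewrite /f; field; rewrite gt_eqF.
    by rewrite sumrB hQ0.2 hPhat.2 subrr.
  have e2 : \sum_(j < n) Q0 j * k = k by rewrite -mulr_suml hQ0.2 mul1r.
  rewrite -e1 -e2; apply: ler_sum => j _; apply: ler_wpM2l; [exact: hQ0.1 | exact: Hm].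
pose A := ln (1 / eps).
pose B : R := 2 * n%:R.
have A0 : 0 < A.
  rewrite /A; apply: ln_gt0; case/andP: heps => e0 e1.
  by rewrite div1r invf_gt1.
have B0 : 0 <= B by rewrite /B mulr_ge0.
pose K := 4 * (A + 2 * B) / q.
have eK : q * K = 4 * (A + 2 * B) by rewrite /K; field; rewrite gt_eqF.
have K0 : 0 < K by rewrite /K divr_gt0 //; lra.
pose C := K + 1.
have C2 : K <= C ^+ 2 by rewrite /C; nra.
have C0 : 0 < C by rewrite /C; lra.
exists C, (expR 1) => p hp.
have p2 : 2 <= p by have := expR_ge1Dx (1 : R); lra.
have p0 : 0 < p by lra.
pose L := ln p.
have L1 : 1 <= L.
  by rewrite /L -[X in X <= _](expRK 1) ler_ln ?posrE ?expR_gt0.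
have Lp1 : ln (p + 1) <= 2 * L.
  have -> : 2 * L = ln (p ^+ 2) by rewrite lnXn // /L mulr_natl.
  rewrite ler_ln ?posrE ?exprn_gt0 //; [nra | lra].
pose r := L / p.
have r0 : 0 < r by rewrite /r divr_gt0 //; lra.
pose dl := C * Num.sqrt r.
have dl0 : 0 < dl by rewrite /dl mulr_gt0 // sqrtr_gt0.
have dl2 : dl ^+ 2 = C ^+ 2 * r by rewrite /dl exprMn sqr_sqrtr // ltW.
rewrite -/dl -/r -/L.
rewrite /alphaL.
set S := [set alpha | _].
have Up : forall a, S a -> a < k.
  move=> a [/andP[a0 a1] hc]; rewrite ltNge; apply/negP => ka.
  have w0 : 0 < 1 - a by lra.
  have D0 : Dstar R n Phat Q0 a <= 0.
    rewrite /Dstar.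
    have hlb : has_lbound [set KL R n P Q0 | P in Pset R n Phat a].
      by exists 0 => _ [P [hPs _] <-]; exact: KL_ge0 hPs hQ0 hQ0pos.
    have -> : (0 : R) = KL R n Q0 Q0.
      rewrite /KL big1 // => i _; rewrite divff ?ln1 ?mulr0 // gt_eqF //.
    apply: (ge_inf hlb); exists Q0 => //; split => // i.
    rewrite ler_pdivlMr //.
    have := Hm i; rewrite /f => hi.
    have h1 : (1 - a) <= Phat i / Q0 i by move: hi ka; rewrite /k /f; lra.
    by move: h1; rewrite ler_pdivlMr // mulrC.
  have pw : 0 < p * (1 - a) by rewrite mulr_gt0.
  have : 0 < ln (1 / eps) / (p * (1 - a))
      + (2 * n%:R) / (p * (1 - a)) * ln (p * (1 - a) + 1).
    have t1 : 0 < ln (1 / eps) / (p * (1 - a)) by rewrite divr_gt0.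
    have t2 : 0 <= (2 * n%:R) / (p * (1 - a)) * ln (p * (1 - a) + 1).
      apply: mulr_ge0; first by rewrite divr_ge0 // ltW.
      by apply: ln_ge0; rewrite lerDr ltW.
    lra.
  lra.
have aL_le : sup S <= k.
  case: (pselect (S !=set0)) => hS.
    by apply: ge_sup => // a /Up /ltW.
  by rewrite sup_out // => -[].
have hub : has_ubound S by exists 1 => a [/andP[_ a1] _]; exact: ltW.
have aL_ge0 : 0 <= sup S.
  case: (pselect (S !=set0)) => hS.
    case: hS => a Sa; apply: le_trans (ub_le_sup hub Sa).
    by case: Sa => /andP[a0 _].
  by rewrite sup_out // => -[].
rewrite ger0_norm; last lra.
case: (leP k dl) => hkd; first lra.
pose a0 := k - dl.
suff Sa0 : S a0 by have := ub_le_sup hub Sa0; rewrite /a0; lra.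
pose w := 1 - a0.
have w0 : 0 < w by rewrite /w /a0; lra.
have w1 : w <= 1 by rewrite /w /a0; lra.
pose d := dl / w.
have d0 : 0 <= d by rewrite /d divr_ge0 // ltW.
have d1 : d <= 1 by rewrite /d ler_pdivrMr // mul1r /w /a0; lra.
split; first by apply/andP; rewrite /a0; split; lra.
rewrite -/w.
have Dlb : q * d ^+ 2 / 4 <= Dstar R n Phat Q0 a0.
  rewrite /Dstar; apply: lb_le_inf.
    exists (KL R n Phat Q0), Phat => //; split => // i.
    rewrite -/w ler_pdivlMr //; have := hPhat.1 i; nra.
  move=> _ [P [hPs hPb] <-].
  apply: KL_single hPs hQ0 hQ0pos _ _; first by rewrite d0 d1.
  have := hPb im; rewrite -/w.
  have -> : Phat im / w = q * (1 - d).
    by rewrite ePh /d /w /a0; field; rewrite gt_eqF // -/a0 -/w.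
  by [].
apply: le_trans Dlb.
have pw : 0 < p * w by rewrite mulr_gt0.
rewrite -(ler_pM2r pw).
apply: (@le_trans _ _ ((A + 2 * B) * L)).
  have E1 : (ln (1 / eps) / (p * w) + 2 * n%:R / (p * w) * ln (p * w + 1)) * (p * w)
     = A + B * ln (p * w + 1).
    by rewrite /A /B; field; rewrite !gt_eqF.
  rewrite E1.
  have h1 : ln (p * w + 1) <= ln (p + 1).
    rewrite ler_ln ?posrE; [nra | nra | lra].
  nra.
have -> : q * d ^+ 2 / 4 * (p * w) = q * C ^+ 2 * L / (4 * w).
  by rewrite /d expr_div_n dl2 /r; field; rewrite !gt_eqF.
rewrite ler_pdivlMr ?mulr_gt0 //.
have q4 : q * C ^+ 2 >= 4 * (A + 2 * B) by rewrite -eK ler_wpM2l // ltW.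
have h1 : (A + 2 * B) * L * (4 * w) <= 4 * (A + 2 * B) * L.
  have : 0 <= (A + 2 * B) * L by apply: mulr_ge0; lra.
  nra.
have h2 : 4 * (A + 2 * B) * L <= q * C ^+ 2 * L by apply: ler_wpM2r; lra.
lra.
Qed.
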